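(* Let $L$ be a pentagonal linkage and $X_k=\{P\in\overline{M^C}(L): |A_3A_5|=k\}$ a slice, parameterized on its relative interior by $x_2$, with prime denoting $d/dx_2$. Then on the relative interior of $X_k$ we have $(b_1)'<0$, $(b_3)'<0$ and $(b_5)'>0$; thus $b_1$ and $b_3$ are decreasing and $b_5$ is increasing in $x_2$.
   Context: A pentagonal linkage $L$ is given by side lengths $a_1,\dots,a_5>0$; $M(L)$ is the set of planar 5-gons $(A_1,\dots,A_5)$ with $|A_iA_{i+1}|=a_i$ (indices mod 5) modulo all isometries of $\mathbb{R}^2$; $M^C(L)$ is the set of strictly convex configurations (convex pentagon $A_1\dots A_5$ in this cyclic order, no angle equal to $\pi$) and $\overline{M^C}(L)$ its closure. $b_i=|A_{i-1}A_{i+1}|$, $x_i=b_i^2$ (indices mod 5). *)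

(* Defs.v *)
From Stdlib Require Import Reals Lra Lia ClassicalEpsilon.
Open Scope R_scope.

(* A planar pentagon: five vertices A1..A5 in R^2. Configurations are taken
   as vertex tuples; every quantity below is invariant under isometries of
   R^2, so working with representatives is harmless. *)
Record pent := Pent { A1 : R * R; A2 : R * R; A3 : R * R; A4 : R * R; A5 : R * R }.

(* vertex with index taken mod 5 (index 0 = index 5) *)
Definition vert (P : pent) (i : nat) : R * R :=
  match (i mod 5)%nat with
  | 1%nat => A1 P | 2%nat => A2 P | 3%nat => A3 P | 4%nat => A4 P | _ => A5 P
  end.

Definition dist (p q : R * R) : R :=
  sqrt ((fst p - fst q) ^ 2 + (snd p - snd q) ^ 2).

Definition orient (p q r : R * R) : R :=
  (fst q - fst p) * (snd r - snd p) - (snd q - snd p) * (fst r - fst p).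

Definition in_M (a : nat -> R) (P : pent) : Prop :=
  forall i : nat, (1 <= i <= 5)%nat -> dist (vert P i) (vert P (i + 1)) = a i.

(* strictly convex pentagon A1..A5 in this cyclic order, no angle equal to pi:
   for every edge A_i A_{i+1}, all the other three vertices lie strictly on
   the same side, the side being the same for all edges. *)
Definition strictly_convex (P : pent) : Prop :=
  (forall i j : nat, (1 <= i <= 5)%nat -> (2 <= j <= 4)%nat ->
      0 < orient (vert P i) (vert P (i + 1)) (vert P (i + j))) \/
  (forall i j : nat, (1 <= i <= 5)%nat -> (2 <= j <= 4)%nat ->
      orient (vert P i) (vert P (i + 1)) (vert P (i + j)) < 0).

Definition in_MC (a : nat -> R) (P : pent) : Prop := in_M a P /\ strictly_convex P.

(* b_i = |A_{i-1} A_{i+1}|,  x_i = b_i^2 *)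
Definition b (i : nat) (P : pent) : R := dist (vert P (i + 4)) (vert P (i + 1)).
Definition x (i : nat) (P : pent) : R := (b i P) ^ 2.

(* relative interior of the slice X_k = { P in closure(M^C) : |A3 A5| = k }:
   the strictly convex configurations with |A3 A5| = b_4 = k *)
Definition slice_int (a : nat -> R) (k : R) (P : pent) : Prop :=
  in_MC a P /\ b 4 P = k.

Definition origin_pent : pent := Pent (0,0) (0,0) (0,0) (0,0) (0,0).

(* the function b_i expressed in the parameter x_2 on the relative interior
   of X_k: its value at t is b_i of the (unique) configuration of the relative
   interior of X_k with x_2 = t *)
Definition b_of_x2 (a : nat -> R) (k : R) (i : nat) (t : R) : R :=
  b i (epsilon (inhabits origin_pent) (fun P => slice_int a k P /\ x 2 P = t)).

(* Main.v *)
Require Import Defs.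
From Stdlib Require Import Reals.
From Stdlib Require Import Lra Lia Psatz Nsatz ClassicalEpsilon List.
From Coquelicot Require Import Coquelicot.
Open Scope R_scope.

Definition Phi (e k : R) (O U X : R*R) : R*R :=
 ((((fst X - fst O)*(fst U - fst O) + (snd X - snd O)*(snd U - snd O))/k),
  (e*((fst U - fst O)*(snd X - snd O) - (snd U - snd O)*(fst X - fst O))/k)).

Lemma Phi_dist e k O U X Y : (e = 1 \/ e = -1) -> k > 0 ->
  (fst U - fst O)^2 + (snd U - snd O)^2 = k^2 ->
  Defs.dist (Phi e k O U X) (Phi e k O U Y) = Defs.dist X Y.
Proof.
intros He Hk Hu. unfold Defs.dist, Phi; cbn [fst snd]. f_equal.
destruct O as [o1 o2], U as [u1 u2], X as [x1 x2], Y as [y1 y2]; cbn [fst snd] in *.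
assert (Hk0 : k <> 0) by lra.
transitivity (((x1-y1)^2+(x2-y2)^2) * ((u1-o1)^2+(u2-o2)^2) / k^2).
- destruct He; subst e; field; lra.
- rewrite Hu; field; lra.
Qed.

Lemma Phi_orient e k O U X Y Z : (e = 1 \/ e = -1) -> k > 0 ->
  (fst U - fst O)^2 + (snd U - snd O)^2 = k^2 ->
  orient (Phi e k O U X) (Phi e k O U Y) (Phi e k O U Z) = e * orient X Y Z.
Proof.
intros He Hk Hu. unfold orient, Phi; cbn [fst snd].
destruct O as [o1 o2], U as [u1 u2], X as [x1 x2], Y as [y1 y2], Z as [z1 z2]; cbn [fst snd] in *.
assert (Hk0 : k <> 0) by lra.
transitivity (e * ((y1 - x1) * (z2 - x2) - (y2 - x2) * (z1 - x1)) * ((u1-o1)^2+(u2-o2)^2) / k^2).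
- destruct He; subst e; field; lra.
- rewrite Hu; field; lra.
Qed.

Definition pp (a : nat -> R) k t := (k^2 + t - a 5%nat ^2)/2.
Definition qq (a : nat -> R) t := (a 2%nat ^2 + t - a 1%nat ^2)/2.
Definition D1 a k t := k^2*t - (pp a k t)^2.
Definition D2 a t := a 2%nat ^2 * t - (qq a t)^2.
Definition rr (a : nat -> R) k := (a 3%nat ^2 + k^2 - a 4%nat ^2)/2.
Definition D3 a k := a 3%nat ^2 * k^2 - (rr a k)^2.
Definition S1 a k t := sqrt (D1 a k t).
Definition S2 a t := sqrt (D2 a t).
Definition TT a k := sqrt (D3 a k).

Definition Cp a k t : pent :=
  Pent (pp a k t / k, S1 a k t / k)
       ((qq a t * pp a k t - S2 a t * S1 a k t)/(k*t),
        (qq a t * S1 a k t + S2 a t * pp a k t)/(k*t))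
       (0,0) (rr a k / k, - TT a k / k) (k, 0).

Lemma sqrt_eq_sq X y : 0 <= y -> X = y^2 -> sqrt X = y.
Proof. intros Hy ->. apply sqrt_pow2; auto. Qed.

Lemma dist_eq_sq p q c : Defs.dist p q = c -> 0 < c ->
  (fst p - fst q)^2 + (snd p - snd q)^2 = c^2.
Proof.
unfold Defs.dist. intros H Hc. set (X := _ + _) in *.
destruct (Rle_or_lt 0 X) as [HX|HX].
- rewrite <- H. rewrite pow2_sqrt; auto.
- rewrite sqrt_neg_0 in H; lra.
Qed.

Lemma sumsq_pos u v : ~ (u = 0 /\ v = 0) -> u^2 + v^2 > 0.
Proof.
intros H. destruct (Req_dec u 0) as [->|Hu].
- destruct (Req_dec v 0) as [->|Hv]; [tauto|]. assert (v*v>0) by (apply Rsqr_pos_lt; auto). nra.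
- assert (u*u>0) by (apply Rsqr_pos_lt; auto). nra.
Qed.

Lemma x2_eq P : x 2 P = (fst (Defs.A1 P) - fst (A3 P))^2 + (snd (Defs.A1 P) - snd (A3 P))^2.
Proof. unfold x, b. change (vert P (2+4)) with (Defs.A1 P). change (vert P (2+1)) with (A3 P).
unfold Defs.dist. rewrite pow2_sqrt; [ring|apply Rplus_le_le_0_compat; apply pow2_ge_0]. Qed.

Lemma b4_eq P : b 4 P = sqrt ((fst (A3 P) - fst (A5 P))^2 + (snd (A3 P) - snd (A5 P))^2).
Proof. reflexivity. Qed.

Lemma key a k P e (He : e = 1 \/ e = -1) :
  (forall i : nat, (1 <= i <= 5)%nat -> 0 < a i) -> in_M a P -> b 4 P = k ->
  (forall i j : nat, (1 <= i <= 5)%nat -> (2 <= j <= 4)%nat ->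
      0 < e * orient (vert P i) (vert P (i + 1)) (vert P (i + j))) ->
  k > 0 /\ x 2 P > 0 /\
  forall n, vert (Cp a k (x 2 P)) n = Phi e k (A3 P) (A5 P) (vert P n).
Proof.
intros Ha HM Hb Hc.
rewrite x2_eq. rewrite b4_eq in Hb.
pose proof (Ha 1%nat ltac:(lia)) as a1p.
pose proof (Ha 2%nat ltac:(lia)) as a2p.
pose proof (Ha 3%nat ltac:(lia)) as a3p.
pose proof (Ha 4%nat ltac:(lia)) as a4p.
pose proof (Ha 5%nat ltac:(lia)) as a5p.
pose proof (dist_eq_sq _ _ _ (HM 1%nat ltac:(lia)) a1p) as E1.
pose proof (dist_eq_sq _ _ _ (HM 2%nat ltac:(lia)) a2p) as E2.
pose proof (dist_eq_sq _ _ _ (HM 3%nat ltac:(lia)) a3p) as E3.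
pose proof (dist_eq_sq _ _ _ (HM 4%nat ltac:(lia)) a4p) as E4.
pose proof (dist_eq_sq _ _ _ (HM 5%nat ltac:(lia)) a5p) as E5.
pose proof (Hc 5%nat 3%nat ltac:(lia) ltac:(lia)) as O1.
pose proof (Hc 1%nat 2%nat ltac:(lia) ltac:(lia)) as O2.
pose proof (Hc 3%nat 2%nat ltac:(lia) ltac:(lia)) as O3.
clear Hc HM.
unfold vert in E1, E2, E3, E4, E5, O1, O2, O3; simpl in E1, E2, E3, E4, E5, O1, O2, O3.
destruct P as [[x1 y1] [x2 y2] [x3 y3] [x4 y4] [x5 y5]].
unfold orient in O1, O2, O3; cbn [fst snd Defs.A1 A2 A3 A4 A5] in *.
set (t := (x1 - x3) ^ 2 + (y1 - y3) ^ 2).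
assert (Hk2 : k^2 = (x3 - x5) ^ 2 + (y3 - y5) ^ 2).
{ rewrite <- Hb. rewrite pow2_sqrt; [ring|apply Rplus_le_le_0_compat; apply pow2_ge_0]. }
assert (kpos : k > 0).
{ rewrite <- Hb. apply sqrt_lt_R0. apply sumsq_pos.
  intros [E E']. assert (x3 = x5) by lra. assert (y3 = y5) by lra. subst.
  replace (e * ((x4 - x5) * (y5 - y5) - (y4 - y5) * (x5 - x5))) with 0 in O3 by ring. lra. }
assert (tpos : t > 0).
{ unfold t. apply sumsq_pos.
  intros [E E']. assert (x1 = x3) by lra. assert (y1 = y3) by lra. subst.
  replace (e * ((x2 - x3) * (y3 - y3) - (y2 - y3) * (x3 - x3))) with 0 in O2 by ring. lra. }
split; [exact kpos|split; [exact tpos|]].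
assert (Q1 : a 1%nat ^2 = (x1 - x2)^2 + (y1 - y2)^2) by (simpl; lra).
assert (Q2 : a 2%nat ^2 = (x2 - x3)^2 + (y2 - y3)^2) by (simpl; lra).
assert (Q3 : a 3%nat ^2 = (x3 - x4)^2 + (y3 - y4)^2) by (simpl; lra).
assert (Q4 : a 4%nat ^2 = (x4 - x5)^2 + (y4 - y5)^2) by (simpl; lra).
assert (Q5 : a 5%nat ^2 = (x5 - x1)^2 + (y5 - y1)^2) by (simpl; lra).
clear E1 E2 E3 E4 E5.
assert (HS1 : S1 a k t = e * ((x5-x3)*(y1-y3) - (y5-y3)*(x1-x3))).
{ unfold S1. apply sqrt_eq_sq.
  - replace (e * ((x5 - x3) * (y1 - y3) - (y5 - y3) * (x1 - x3))) with
      (e * ((x1 - x5) * (y3 - y5) - (y1 - y5) * (x3 - x5))) by ring. lra.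
  - unfold D1, pp. rewrite Hk2, Q5. unfold t. destruct He; subst e; field. }
assert (HS2 : S2 a t = e * ((x1-x3)*(y2-y3) - (y1-y3)*(x2-x3))).
{ unfold S2. apply sqrt_eq_sq.
  - replace (e * ((x1 - x3) * (y2 - y3) - (y1 - y3) * (x2 - x3))) with
      (e * ((x2 - x1) * (y3 - y1) - (y2 - y1) * (x3 - x1))) by ring. lra.
  - unfold D2, qq. rewrite Q1, Q2. unfold t. destruct He; subst e; field. }
assert (HT : TT a k = - e * ((x5-x3)*(y4-y3) - (y5-y3)*(x4-x3))).
{ unfold TT. apply sqrt_eq_sq.
  - replace (- e * ((x5 - x3) * (y4 - y3) - (y5 - y3) * (x4 - x3))) with
      (e * ((x4 - x3) * (y5 - y3) - (y4 - y3) * (x5 - x3))) by ring. lra.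
  - unfold D3, rr. rewrite Hk2, Q3, Q4. destruct He; subst e; field. }
assert (k <> 0) by lra.
assert (tn : (x1 - x3) ^ 2 + (y1 - y3) ^ 2 <> 0) by (fold t; lra).
intro n. unfold vert, Cp, Phi. cbn [fst snd Defs.A1 A2 A3 A4 A5].
destruct (n mod 5)%nat as [|[|[|[|[|m]]]]]; cbn [fst snd Defs.A1 A2 A3 A4 A5];
  apply pair_equal_spec; split.
- apply Rmult_eq_reg_r with k; auto. field_simplify; auto. rewrite Hk2; ring.
- unfold Rdiv; ring.
- unfold pp. rewrite Hk2, Q5. unfold t. field; auto.
- rewrite HS1. reflexivity.
- rewrite HS1, HS2. unfold pp, qq. rewrite Hk2, Q5, Q1, Q2. unfold t.
  destruct He; subst e; field; auto.
- rewrite HS1, HS2. unfold pp, qq. rewrite Hk2, Q5, Q1, Q2. unfold t.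
  destruct He; subst e; field; auto.
- unfold Rdiv; ring.
- unfold Rdiv; ring.
- unfold rr. rewrite Hk2, Q3, Q4. field; auto.
- rewrite HT. field; auto.
- apply Rmult_eq_reg_r with k; auto. field_simplify; auto. rewrite Hk2; ring.
- unfold Rdiv; ring.
Qed.

Definition G1 a k t := qq a t * S1 a k t + pp a k t * S2 a t.
Definition G2 a k t := (t - pp a k t) * S2 a t + (t - qq a t) * S1 a k t.
Definition G3 a k t := (k^2 - rr a k) * S1 a k t + TT a k * (k^2 - pp a k t).
Definition G4 a k t := rr a k * G1 a k t + TT a k * (qq a t * pp a k t - S1 a k t * S2 a t).
Definition NN a k t := (qq a t * pp a k t - S1 a k t * S2 a t)/t.
Definition VV a k t := (qq a t * S1 a k t + S2 a t * pp a k t)/t.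
Definition H1 a k t := k^2 + a 2%nat ^2 - 2*NN a k t.
Definition H3 a k t := a 3%nat ^2 + a 2%nat ^2 - 2*((rr a k * NN a k t - TT a k * VV a k t)/k^2).
Definition H5 a k t := a 3%nat ^2 + t - 2*((rr a k * pp a k t - TT a k * S1 a k t)/k^2).

Lemma S1_sq a k t : D1 a k t >= 0 -> S1 a k t ^2 = D1 a k t.
Proof. intros; unfold S1; rewrite pow2_sqrt; lra. Qed.
Lemma S2_sq a t : D2 a t >= 0 -> S2 a t ^2 = D2 a t.
Proof. intros; unfold S2; rewrite pow2_sqrt; lra. Qed.
Lemma TT_sq a k : D3 a k >= 0 -> TT a k ^2 = D3 a k.
Proof. intros; unfold TT; rewrite pow2_sqrt; lra. Qed.
Lemma S1_pos a k t : D1 a k t > 0 -> S1 a k t > 0.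
Proof. intros; unfold S1; apply sqrt_lt_R0; lra. Qed.
Lemma S2_pos a t : D2 a t > 0 -> S2 a t > 0.
Proof. intros; unfold S2; apply sqrt_lt_R0; lra. Qed.

Lemma is_derive_eqv (f : R -> R) x l l' : is_derive f x l -> l = l' -> is_derive f x l'.
Proof. intros H ->; exact H. Qed.

Lemma dS1 a k t : D1 a k t > 0 ->
  is_derive (S1 a k) t ((k^2 - pp a k t)/(2 * S1 a k t)).
Proof.
intros HD. pose proof (S1_pos _ _ _ HD) as Hp.
assert (dD : is_derive (D1 a k) t (k^2 - pp a k t))
  by (unfold D1, pp; auto_derive; [trivial|field]).
eapply is_derive_eqv. { apply (is_derive_sqrt (D1 a k)); [exact dD|exact HD]. }
reflexivity.
Qed.

Lemma dS2 a t : D2 a t > 0 ->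
  is_derive (S2 a) t ((a 2%nat ^2 - qq a t)/(2 * S2 a t)).
Proof.
intros HD. pose proof (S2_pos _ _ HD) as Hp.
assert (dD : is_derive (D2 a) t (a 2%nat ^2 - qq a t))
  by (unfold D2, qq; auto_derive; [trivial|field]).
eapply is_derive_eqv. { apply (is_derive_sqrt (D2 a)); [exact dD|exact HD]. }
reflexivity.
Qed.


Lemma frac_eq A B c d : c <> 0 -> d <> 0 -> A * d = B * c -> A / c = B / d.
Proof. intros Hc Hd H. apply Rmult_eq_reg_r with (c*d); [|apply Rmult_integral_contrapositive; auto].
replace (A / c * (c*d)) with (A*d) by (field; auto). replace (B/d*(c*d)) with (B*c) by (field;auto). exact H. Qed.

Ltac finish_nsatz :=
  match goal with |- ?A / ?c = ?B / ?d => apply (frac_eq A B c d); [lra|lra|simpl in *; nsatz] end.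

Ltac derive_common E1 E2 :=
  replace (Derive (fun x : R => S1 _ _ x) _) with ((_ ^2 - pp _ _ _)/(2 * S1 _ _ _))
    by (symmetry; apply is_derive_unique; exact E1);
  replace (Derive (fun x : R => S2 _ x) _) with ((_ 2%nat ^2 - qq _ _)/(2 * S2 _ _))
    by (symmetry; apply is_derive_unique; exact E2).

Lemma dNN a k t : t > 0 -> D1 a k t > 0 -> D2 a t > 0 ->
  is_derive (NN a k) t ((G1 a k t * G2 a k t)/(2 * t^2 * S1 a k t * S2 a t)).
Proof.
intros Ht HD1 HD2.
pose proof (dS1 _ _ _ HD1) as E1. pose proof (dS2 _ _ HD2) as E2.
pose proof (S1_pos _ _ _ HD1) as P1. pose proof (S2_pos _ _ HD2) as P2.
pose proof (S1_sq _ _ _ (Rgt_ge _ _ HD1)) as Q1. pose proof (S2_sq _ _ (Rgt_ge _ _ HD2)) as Q2.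
unfold NN, pp, qq. auto_derive.
- repeat split; try lra; eexists; eauto.
- replace (Derive (fun x : R => S1 a k x) t) with ((k^2 - pp a k t)/(2 * S1 a k t))
    by (symmetry; apply is_derive_unique; exact E1).
  replace (Derive (fun x : R => S2 a x) t) with ((a 2%nat ^2 - qq a t)/(2 * S2 a t))
    by (symmetry; apply is_derive_unique; exact E2).
  unfold G1, G2, pp, qq in *. unfold D1, D2, pp, qq in Q1, Q2.
  set (s1 := S1 a k t) in *. set (s2 := S2 a t) in *.
  apply Rmult_eq_reg_r with (t^2*s1*s2); [|apply Rmult_integral_contrapositive; split;
     [apply Rmult_integral_contrapositive; split|]; try apply pow_nonzero; lra].
  assert (Q1' : 4*s1^2 = 4*k^2*t - (k^2+t-a 5%nat ^2)^2) by (rewrite Q1; field).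
  assert (Q2' : 4*s2^2 = 4*a 2%nat^2*t - (a 2%nat^2+t-a 1%nat ^2)^2) by (rewrite Q2; field).
  clear Q1 Q2.
  field_simplify; try (repeat split; lra).
  finish_nsatz.
Qed.

Lemma dVV a k t : t > 0 -> D1 a k t > 0 -> D2 a t > 0 ->
  is_derive (VV a k) t (- ((qq a t * pp a k t - S1 a k t * S2 a t) * G2 a k t)/(2 * t^2 * S1 a k t * S2 a t)).
Proof.
intros Ht HD1 HD2.
pose proof (dS1 _ _ _ HD1) as E1. pose proof (dS2 _ _ HD2) as E2.
pose proof (S1_pos _ _ _ HD1) as P1. pose proof (S2_pos _ _ HD2) as P2.
pose proof (S1_sq _ _ _ (Rgt_ge _ _ HD1)) as Q1. pose proof (S2_sq _ _ (Rgt_ge _ _ HD2)) as Q2.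
unfold VV, pp, qq. auto_derive.
- repeat split; try lra; eexists; eauto.
- replace (Derive (fun x : R => S1 a k x) t) with ((k^2 - pp a k t)/(2 * S1 a k t))
    by (symmetry; apply is_derive_unique; exact E1).
  replace (Derive (fun x : R => S2 a x) t) with ((a 2%nat ^2 - qq a t)/(2 * S2 a t))
    by (symmetry; apply is_derive_unique; exact E2).
  unfold G1, G2, pp, qq in *. unfold D1, D2, pp, qq in Q1, Q2.
  set (s1 := S1 a k t) in *. set (s2 := S2 a t) in *.
  apply Rmult_eq_reg_r with (t^2*s1*s2); [|apply Rmult_integral_contrapositive; split;
     [apply Rmult_integral_contrapositive; split|]; try apply pow_nonzero; lra].
  assert (Q1' : 4*s1^2 = 4*k^2*t - (k^2+t-a 5%nat ^2)^2) by (rewrite Q1; field).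
  assert (Q2' : 4*s2^2 = 4*a 2%nat^2*t - (a 2%nat^2+t-a 1%nat ^2)^2) by (rewrite Q2; field).
  clear Q1 Q2.
  field_simplify; try (repeat split; lra).
  finish_nsatz.
Qed.

Lemma dH1 a k t : t > 0 -> D1 a k t > 0 -> D2 a t > 0 ->
  is_derive (H1 a k) t (-(G1 a k t * G2 a k t)/(t^2 * S1 a k t * S2 a t)).
Proof.
intros Ht HD1 HD2. pose proof (dNN _ _ _ Ht HD1 HD2) as E.
pose proof (S1_pos _ _ _ HD1) as P1. pose proof (S2_pos _ _ HD2) as P2.
unfold H1. auto_derive.
- repeat split; try (eexists; exact E).
- replace (Derive (fun x : R => NN a k x) t) with ((G1 a k t * G2 a k t)/(2 * t^2 * S1 a k t * S2 a t))
    by (symmetry; apply is_derive_unique; exact E).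
  field. lra.
Qed.

Lemma dH3 a k t : t > 0 -> k > 0 -> D1 a k t > 0 -> D2 a t > 0 ->
  is_derive (H3 a k) t (-(G2 a k t * G4 a k t)/(k^2 * t^2 * S1 a k t * S2 a t)).
Proof.
intros Ht Hk HD1 HD2. pose proof (dNN _ _ _ Ht HD1 HD2) as E. pose proof (dVV _ _ _ Ht HD1 HD2) as E'.
pose proof (S1_pos _ _ _ HD1) as P1. pose proof (S2_pos _ _ HD2) as P2.
unfold H3. auto_derive.
- repeat split; try (eexists; exact E); try (eexists; exact E'); assert (k*k>0) by nra; nra.
- replace (Derive (fun x : R => NN a k x) t) with ((G1 a k t * G2 a k t)/(2 * t^2 * S1 a k t * S2 a t))
    by (symmetry; apply is_derive_unique; exact E).
  replace (Derive (fun x : R => VV a k x) t) with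
    (- ((qq a t * pp a k t - S1 a k t * S2 a t) * G2 a k t)/(2 * t^2 * S1 a k t * S2 a t))
    by (symmetry; apply is_derive_unique; exact E').
  unfold G4. field. lra.
Qed.

Lemma dH5 a k t : k > 0 -> D1 a k t > 0 ->
  is_derive (H5 a k) t (G3 a k t/(k^2 * S1 a k t)).
Proof.
intros Hk HD1.
pose proof (dS1 _ _ _ HD1) as E1.
pose proof (S1_pos _ _ _ HD1) as P1.
unfold H5, pp. auto_derive.
- repeat split; try (eexists; exact E1); assert (k*k>0) by nra; nra.
- replace (Derive (fun x : R => S1 a k x) t) with ((k^2 - pp a k t)/(2 * S1 a k t))
    by (symmetry; apply is_derive_unique; exact E1).
  unfold G3, pp, rr. set (s1 := S1 a k t) in *. set (T := TT a k).
  field. lra.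
Qed.

Lemma div_zero_num P Q : P = 0 -> P / Q = 0.
Proof. intros ->; unfold Rdiv; ring. Qed.

Ltac nz := repeat split; try apply pow_nonzero; try lra;
   try (apply Rmult_integral_contrapositive; split); try apply pow_nonzero; lra.

Ltac alg := apply Rminus_diag_uniq; field_simplify;
  [ first [apply div_zero_num | idtac]; simpl in *; nsatz | .. ].


Lemma Cp_alg a k t (Hk : k > 0) (Ht : t > 0) (HD1 : D1 a k t >= 0) (HD2 : D2 a t >= 0)
  (HD3 : D3 a k >= 0) :
  let C := Cp a k t in
  (fst (Defs.A1 C) - fst (A2 C))^2 + (snd (Defs.A1 C) - snd (A2 C))^2 = a 1%nat ^2 /\
  (fst (A2 C) - fst (A3 C))^2 + (snd (A2 C) - snd (A3 C))^2 = a 2%nat ^2 /\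
  (fst (A3 C) - fst (A4 C))^2 + (snd (A3 C) - snd (A4 C))^2 = a 3%nat ^2 /\
  (fst (A4 C) - fst (A5 C))^2 + (snd (A4 C) - snd (A5 C))^2 = a 4%nat ^2 /\
  (fst (A5 C) - fst (Defs.A1 C))^2 + (snd (A5 C) - snd (Defs.A1 C))^2 = a 5%nat ^2 /\
  (fst (Defs.A1 C) - fst (A3 C))^2 + (snd (Defs.A1 C) - snd (A3 C))^2 = t /\
  (fst (A5 C) - fst (A2 C))^2 + (snd (A5 C) - snd (A2 C))^2 = H1 a k t /\
  (fst (A2 C) - fst (A4 C))^2 + (snd (A2 C) - snd (A4 C))^2 = H3 a k t /\
  (fst (A4 C) - fst (Defs.A1 C))^2 + (snd (A4 C) - snd (Defs.A1 C))^2 = H5 a k t.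
Proof.
pose proof (S1_sq _ _ _ HD1) as Q1. pose proof (S2_sq _ _ HD2) as Q2. pose proof (TT_sq _ _ HD3) as Q3.
unfold Cp, H1, H3, H5, NN, VV; cbn [fst snd Defs.A1 A2 A3 A4 A5].
unfold D1, D2, D3, pp, qq, rr in *.
set (s1 := S1 a k t) in *. set (s2 := S2 a t) in *. set (T := TT a k) in *.
assert (Q1' : 4*s1^2 = 4*k^2*t - (k^2+t-a 5%nat ^2)^2) by (rewrite Q1; field).
assert (Q2' : 4*s2^2 = 4*a 2%nat^2*t - (a 2%nat^2+t-a 1%nat ^2)^2) by (rewrite Q2; field).
assert (Q3' : 4*T^2 = 4*a 3%nat^2*k^2 - (a 3%nat^2+k^2-a 4%nat ^2)^2) by (rewrite Q3; field).
clear Q1 Q2 Q3.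
repeat split; alg; nz.
Qed.

Lemma Cp_orient a k t (Hk : k > 0) (Ht : t > 0) (HD1 : D1 a k t >= 0) (HD2 : D2 a t >= 0)
  (HD3 : D3 a k >= 0) :
  let C := Cp a k t in
  orient (A5 C) (Defs.A1 C) (A3 C) = S1 a k t /\
  orient (Defs.A1 C) (A2 C) (A3 C) = S2 a t /\
  orient (A3 C) (A4 C) (A5 C) = TT a k /\
  orient (A2 C) (A3 C) (A5 C) = G1 a k t / t /\
  orient (Defs.A1 C) (A2 C) (A5 C) = G2 a k t / t /\
  orient (A4 C) (A5 C) (Defs.A1 C) = G3 a k t / k^2 /\
  orient (A2 C) (A3 C) (A4 C) = G4 a k t / (k^2 * t).
Proof.
pose proof (S1_sq _ _ _ HD1) as Q1. pose proof (S2_sq _ _ HD2) as Q2. pose proof (TT_sq _ _ HD3) as Q3.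
unfold Cp, G4, G1, G2, G3, orient; cbn [fst snd Defs.A1 A2 A3 A4 A5].
unfold D1, D2, D3, pp, qq, rr in *.
set (s1 := S1 a k t) in *. set (s2 := S2 a t) in *. set (T := TT a k) in *.
assert (Q1' : 4*s1^2 = 4*k^2*t - (k^2+t-a 5%nat ^2)^2) by (rewrite Q1; field).
assert (Q2' : 4*s2^2 = 4*a 2%nat^2*t - (a 2%nat^2+t-a 1%nat ^2)^2) by (rewrite Q2; field).
assert (Q3' : 4*T^2 = 4*a 3%nat^2*k^2 - (a 3%nat^2+k^2-a 4%nat ^2)^2) by (rewrite Q3; field).
clear Q1 Q2 Q3.
split. alg; nz.
split. alg; nz.
split. alg; nz.
split. alg; nz.
split. alg; nz.
split. alg; nz.
field; nz.
Qed.

Definition ccw (C : pent) : Prop := forall i j : nat, (1 <= i <= 5)%nat -> (2 <= j <= 4)%nat ->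
      0 < orient (vert C i) (vert C (i + 1)) (vert C (i + j)).

Lemma sqrt_pos_arg X : sqrt X > 0 -> X > 0.
Proof. intros H. destruct (Rle_or_lt X 0) as [h|h]; auto. rewrite sqrt_neg_0 in H; lra. Qed.

Lemma ccw_D a k t : k > 0 -> t > 0 -> ccw (Cp a k t) ->
  D1 a k t > 0 /\ D2 a t > 0 /\ D3 a k > 0 /\
  G1 a k t > 0 /\ G2 a k t > 0 /\ G3 a k t > 0 /\ G4 a k t > 0.
Proof.
intros Hk Ht Hc.
set (C := Cp a k t).
assert (O1 : 0 < orient (A5 C) (Defs.A1 C) (A3 C)) by exact (Hc 5%nat 3%nat ltac:(lia) ltac:(lia)).
assert (O2 : 0 < orient (Defs.A1 C) (A2 C) (A3 C)) by exact (Hc 1%nat 2%nat ltac:(lia) ltac:(lia)).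
assert (O3 : 0 < orient (A3 C) (A4 C) (A5 C)) by exact (Hc 3%nat 2%nat ltac:(lia) ltac:(lia)).
assert (O4 : 0 < orient (A2 C) (A3 C) (A5 C)) by exact (Hc 2%nat 3%nat ltac:(lia) ltac:(lia)).
assert (O5 : 0 < orient (Defs.A1 C) (A2 C) (A5 C)) by exact (Hc 1%nat 4%nat ltac:(lia) ltac:(lia)).
assert (O6 : 0 < orient (A4 C) (A5 C) (Defs.A1 C)) by exact (Hc 4%nat 2%nat ltac:(lia) ltac:(lia)).
assert (O7 : 0 < orient (A2 C) (A3 C) (A4 C)) by exact (Hc 2%nat 2%nat ltac:(lia) ltac:(lia)).
unfold C in *.
assert (HD1 : D1 a k t > 0).
{ apply sqrt_pos_arg. fold (S1 a k t).
  replace (S1 a k t) with (orient (A5 (Cp a k t)) (Defs.A1 (Cp a k t)) (A3 (Cp a k t))); auto.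
  unfold orient, Cp; cbn [fst snd Defs.A1 A2 A3 A4 A5]. field; lra. }
assert (HD3 : D3 a k > 0).
{ apply sqrt_pos_arg. fold (TT a k).
  replace (TT a k) with (orient (A3 (Cp a k t)) (A4 (Cp a k t)) (A5 (Cp a k t))); auto.
  unfold orient, Cp; cbn [fst snd Defs.A1 A2 A3 A4 A5]. field; lra. }
assert (HD2 : D2 a t > 0).
{ apply sqrt_pos_arg. fold (S2 a t).
  replace (S2 a t) with (orient (Defs.A1 (Cp a k t)) (A2 (Cp a k t)) (A3 (Cp a k t))); auto.
  pose proof (S1_sq _ _ _ (Rgt_ge _ _ HD1)) as Q1. unfold D1 in Q1.
  unfold orient, Cp; cbn [fst snd Defs.A1 A2 A3 A4 A5].
  apply Rmult_eq_reg_r with (k^2*t); [|apply Rmult_integral_contrapositive; split; try apply pow_nonzero; lra].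
  transitivity (S2 a t * (pp a k t ^2 + S1 a k t ^2)). field; lra. rewrite Q1. field. }
destruct (Cp_orient a k t Hk Ht (Rgt_ge _ _ HD1) (Rgt_ge _ _ HD2) (Rgt_ge _ _ HD3))
  as (_ & _ & _ & E4 & E5 & E6 & E7).
rewrite E4 in O4. rewrite E5 in O5. rewrite E6 in O6. rewrite E7 in O7.
repeat split; auto.
- apply Rmult_lt_reg_r with (/t). apply Rinv_0_lt_compat; lra. rewrite Rmult_0_l. exact O4.
- apply Rmult_lt_reg_r with (/t). apply Rinv_0_lt_compat; lra. rewrite Rmult_0_l. exact O5.
- apply Rmult_lt_reg_r with (/k^2). apply Rinv_0_lt_compat; apply pow_lt; lra. rewrite Rmult_0_l. exact O6.
- apply Rmult_lt_reg_r with (/(k^2*t)). apply Rinv_0_lt_compat; apply Rmult_lt_0_compat; try apply pow_lt; lra.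
  rewrite Rmult_0_l. exact O7.
Qed.

Lemma b_Cp a k t : k > 0 -> t > 0 -> D1 a k t >= 0 -> D2 a t >= 0 -> D3 a k >= 0 ->
  b 1 (Cp a k t) = sqrt (H1 a k t) /\ b 3 (Cp a k t) = sqrt (H3 a k t) /\
  b 5 (Cp a k t) = sqrt (H5 a k t).
Proof.
intros Hk Ht H1' H2' H3'.
destruct (Cp_alg a k t Hk Ht H1' H2' H3') as (_ & _ & _ & _ & _ & _ & E1 & E3 & E5).
unfold b, Defs.dist. repeat split.
- change (vert (Cp a k t) (1+4)) with (A5 (Cp a k t)). change (vert (Cp a k t) (1+1)) with (A2 (Cp a k t)).
  rewrite E1; auto.
- change (vert (Cp a k t) (3+4)) with (A2 (Cp a k t)). change (vert (Cp a k t) (3+1)) with (A4 (Cp a k t)).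
  rewrite E3; auto.
- change (vert (Cp a k t) (5+4)) with (A4 (Cp a k t)). change (vert (Cp a k t) (5+1)) with (Defs.A1 (Cp a k t)).
  rewrite E5; auto.
Qed.

Lemma Cp_slice a k t : (forall i : nat, (1 <= i <= 5)%nat -> 0 < a i) ->
  k > 0 -> t > 0 -> ccw (Cp a k t) -> slice_int a k (Cp a k t) /\ x 2 (Cp a k t) = t.
Proof.
intros Ha Hk Ht Hc.
destruct (ccw_D a k t Hk Ht Hc) as (HD1 & HD2 & HD3 & _).
destruct (Cp_alg a k t Hk Ht (Rgt_ge _ _ HD1) (Rgt_ge _ _ HD2) (Rgt_ge _ _ HD3))
  as (E1 & E2 & E3 & E4 & E5 & Et & _).
split; [split; [split|]|].
- intros i Hi. unfold Defs.dist.
  assert (i = 1 \/ i = 2 \/ i = 3 \/ i = 4 \/ i = 5)%nat as Hi' by lia.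
  destruct Hi' as [E|[E|[E|[E|E]]]]; subst i.
  + change (vert (Cp a k t) 1) with (Defs.A1 (Cp a k t)). change (vert (Cp a k t) (1+1)) with (A2 (Cp a k t)).
    rewrite E1; apply sqrt_pow2; apply Rlt_le; apply Ha; lia.
  + change (vert (Cp a k t) 2) with (A2 (Cp a k t)). change (vert (Cp a k t) (2+1)) with (A3 (Cp a k t)).
    rewrite E2; apply sqrt_pow2; apply Rlt_le; apply Ha; lia.
  + change (vert (Cp a k t) 3) with (A3 (Cp a k t)). change (vert (Cp a k t) (3+1)) with (A4 (Cp a k t)).
    rewrite E3; apply sqrt_pow2; apply Rlt_le; apply Ha; lia.
  + change (vert (Cp a k t) 4) with (A4 (Cp a k t)). change (vert (Cp a k t) (4+1)) with (A5 (Cp a k t)).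
    rewrite E4; apply sqrt_pow2; apply Rlt_le; apply Ha; lia.
  + change (vert (Cp a k t) 5) with (A5 (Cp a k t)). change (vert (Cp a k t) (5+1)) with (Defs.A1 (Cp a k t)).
    rewrite E5; apply sqrt_pow2; apply Rlt_le; apply Ha; lia.
- left. exact Hc.
- rewrite b4_eq. unfold Cp; cbn [fst snd Defs.A1 A2 A3 A4 A5].
  apply sqrt_eq_sq; [lra|ring].
- rewrite x2_eq. exact Et.
Qed.

Lemma slice_facts a k P : (forall i : nat, (1 <= i <= 5)%nat -> 0 < a i) -> slice_int a k P ->
  k > 0 /\ x 2 P > 0 /\ ccw (Cp a k (x 2 P)) /\ (forall i, b i P = b i (Cp a k (x 2 P))).
Proof.
intros Ha [[HM Hconv] Hb].
assert (He : exists e, (e = 1 \/ e = -1) /\ forall i j : nat, (1 <= i <= 5)%nat -> (2 <= j <= 4)%nat ->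
      0 < e * orient (vert P i) (vert P (i + 1)) (vert P (i + j))).
{ destruct Hconv as [H|H].
  - exists 1; split; auto. intros i j Hi Hj. specialize (H i j Hi Hj). lra.
  - exists (-1); split; auto. intros i j Hi Hj. specialize (H i j Hi Hj). lra. }
destruct He as [e [He Ho]].
destruct (key a k P e He Ha HM Hb Ho) as (Hk & Ht & Hv).
assert (Hu : (fst (A5 P) - fst (A3 P))^2 + (snd (A5 P) - snd (A3 P))^2 = k^2).
{ rewrite b4_eq in Hb. rewrite <- Hb. rewrite pow2_sqrt. ring.
  apply Rplus_le_le_0_compat; apply pow2_ge_0. }
split; [exact Hk|split; [exact Ht|split]].
- intros i j Hi Hj. rewrite !Hv. rewrite Phi_orient; auto.
- intros i. unfold b. rewrite !Hv. rewrite Phi_dist; auto.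
Qed.

Lemma bofx2_eq a k t i : (forall i : nat, (1 <= i <= 5)%nat -> 0 < a i) ->
  k > 0 -> t > 0 -> ccw (Cp a k t) -> b_of_x2 a k i t = b i (Cp a k t).
Proof.
intros Ha Hk Ht Hc. unfold b_of_x2.
destruct (Cp_slice a k t Ha Hk Ht Hc) as [HS Hx].
pose proof (epsilon_spec (inhabits origin_pent) (fun P => slice_int a k P /\ x 2 P = t)
   (ex_intro _ (Cp a k t) (conj HS Hx))) as [HR HRx].
set (R0 := epsilon _ _) in *.
destruct (slice_facts a k R0 Ha HR) as (_ & _ & _ & Hb).
rewrite Hb, HRx. reflexivity.
Qed.

Lemma cont_pos f t0 : continuity_pt f t0 -> f t0 > 0 ->
  exists d, d > 0 /\ forall t, Rabs (t - t0) < d -> f t > 0.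
Proof.
intros Hc Hp. unfold continuity_pt, continue_in, limit1_in, limit_in in Hc.
destruct (Hc (f t0) Hp) as [d [Hd H]]. exists d; split; auto.
intros t Ht. destruct (Req_dec t t0) as [->|Hne]; auto.
assert (D : D_x no_cond t0 t /\ R_dist t t0 < d).
{ split; [split; [constructor|auto]|exact Ht]. }
specialize (H t D). unfold R_dist in H. simpl in H. unfold R_dist in H.
apply Rabs_def2 in H. lra.
Qed.

Lemma near_list (P : nat * nat -> R -> Prop) t0 (l : list (nat*nat)) :
  (forall ij, In ij l -> exists d, d > 0 /\ forall t, Rabs (t - t0) < d -> P ij t) ->
  exists d, d > 0 /\ forall t, Rabs (t - t0) < d -> forall ij, In ij l -> P ij t.
Proof.
induction l as [|ij l IH]; intros H.
- exists 1; split; [lra|]. intros t _ ij [].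
- destruct (H ij (or_introl eq_refl)) as [d1 [Hd1 H1]].
  destruct IH as [d2 [Hd2 H2]]. { intros ij' Hin. apply H. right; exact Hin. }
  exists (Rmin d1 d2); split. { apply Rmin_pos; auto. }
  intros t Ht ij' [<-|Hin].
  + apply H1. eapply Rlt_le_trans; [exact Ht|apply Rmin_l].
  + apply H2; auto. eapply Rlt_le_trans; [exact Ht|apply Rmin_r].
Qed.

Definition pairs15 : list (nat*nat) :=
  ((1,2)::(1,3)::(1,4)::(2,2)::(2,3)::(2,4)::(3,2)::(3,3)::(3,4)::(4,2)::(4,3)::(4,4)::(5,2)::(5,3)::(5,4)::nil)%nat.

Lemma in_pairs15 i j : (1 <= i <= 5)%nat -> (2 <= j <= 4)%nat -> In (i,j) pairs15.
Proof.
intros Hi Hj.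
assert (i = 1 \/ i = 2 \/ i = 3 \/ i = 4 \/ i = 5)%nat as Hi' by lia.
assert (j = 2 \/ j = 3 \/ j = 4)%nat as Hj' by lia.
destruct Hi' as [E|[E|[E|[E|E]]]]; destruct Hj' as [F|[F|F]]; subst; simpl; tauto.
Qed.

Lemma cont_of_derive f t0 : ex_derive f t0 -> continuity_pt f t0.
Proof.
intros H. apply continuity_pt_filterlim. apply (ex_derive_continuous f t0 H).
Qed.

Lemma Cp_coord_cont a k t0 n : k > 0 -> t0 > 0 -> D1 a k t0 > 0 -> D2 a t0 > 0 ->
  continuity_pt (fun t => fst (vert (Cp a k t) n)) t0 /\
  continuity_pt (fun t => snd (vert (Cp a k t) n)) t0.
Proof.
intros Hk Ht HD1 HD2.
pose proof (dS1 _ _ _ HD1) as E1. pose proof (dS2 _ _ HD2) as E2.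
unfold vert. destruct (n mod 5)%nat as [|[|[|[|[|m]]]]]; unfold Cp; cbn [fst snd Defs.A1 A2 A3 A4 A5];
  split; apply cont_of_derive; unfold pp, qq; auto_derive; repeat split;
  try (eexists; exact E1); try (eexists; exact E2); try lra; nra.
Qed.

Lemma orient_cont (f1 g1 f2 g2 f3 g3 : R -> R) t0 :
  continuity_pt f1 t0 -> continuity_pt g1 t0 -> continuity_pt f2 t0 -> continuity_pt g2 t0 ->
  continuity_pt f3 t0 -> continuity_pt g3 t0 ->
  continuity_pt (fun t => orient (f1 t, g1 t) (f2 t, g2 t) (f3 t, g3 t)) t0.
Proof.
intros. unfold orient; cbn [fst snd].
apply continuity_pt_minus; apply continuity_pt_mult; apply continuity_pt_minus; auto.
Qed.

Lemma ccw_near a k t0 : k > 0 -> t0 > 0 -> ccw (Cp a k t0) ->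
  exists d, d > 0 /\ forall t, Rabs (t - t0) < d -> t > 0 /\ ccw (Cp a k t).
Proof.
intros Hk Ht Hc.
destruct (ccw_D a k t0 Hk Ht Hc) as (HD1 & HD2 & _).
destruct (near_list (fun ij t => 0 < orient (vert (Cp a k t) (fst ij)) (vert (Cp a k t) (fst ij + 1))
            (vert (Cp a k t) (fst ij + snd ij))) t0 pairs15) as [d [Hd H]].
{ intros [i j] Hin. simpl fst; simpl snd.
  apply (cont_pos (fun t => orient (vert (Cp a k t) i) (vert (Cp a k t) (i + 1)) (vert (Cp a k t) (i + j))) t0).
  - destruct (Cp_coord_cont a k t0 i Hk Ht HD1 HD2) as [c1 c2].
    destruct (Cp_coord_cont a k t0 (i+1) Hk Ht HD1 HD2) as [c3 c4].
    destruct (Cp_coord_cont a k t0 (i+j) Hk Ht HD1 HD2) as [c5 c6].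
    pose proof (orient_cont _ _ _ _ _ _ t0 c1 c2 c3 c4 c5 c6) as HH.
    eapply continuity_pt_ext; [|exact HH]. intros t. simpl.
    rewrite <- !surjective_pairing. reflexivity.
  - simpl in Hin. apply Hc.
    + repeat (destruct Hin as [Hin|Hin]; [inversion Hin; lia|]); destruct Hin.
    + repeat (destruct Hin as [Hin|Hin]; [inversion Hin; lia|]); destruct Hin. }
exists (Rmin d t0); split. { apply Rmin_pos; auto. }
intros t Htd. split.
- assert (Rabs (t - t0) < t0) by (eapply Rlt_le_trans; [exact Htd|apply Rmin_r]).
  apply Rabs_def2 in H0. lra.
- intros i j Hi Hj. apply (H t) with (ij := (i,j)).
  + eapply Rlt_le_trans; [exact Htd|apply Rmin_l].
  + apply in_pairs15; auto.
Qed.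

Lemma derivable_local (f g : R -> R) x l d : d > 0 -> (forall t, Rabs (t - x) < d -> f t = g t) ->
  derivable_pt_lim g x l -> derivable_pt_lim f x l.
Proof.
intros Hd Heq Hg eps Heps. destruct (Hg eps Heps) as [dl Hdl].
assert (Hm : 0 < Rmin dl d) by (apply Rmin_pos; [apply (cond_pos dl)|lra]).
exists (mkposreal _ Hm). intros h Hh0 Hh. simpl in Hh.
rewrite !Heq.
- apply Hdl; auto. eapply Rlt_le_trans; [exact Hh|apply Rmin_l].
- rewrite Rminus_diag, Rabs_R0; lra.
- replace (x + h - x) with h by ring. eapply Rlt_le_trans; [exact Hh|apply Rmin_r].
Qed.

Lemma prod3 x y z : 0 < x -> 0 < y -> 0 < z -> 0 < x*y*z.
Proof. intros; repeat apply Rmult_lt_0_compat; auto. Qed.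
Lemma prod4 x y z w : 0 < x -> 0 < y -> 0 < z -> 0 < w -> 0 < x*y*z*w.
Proof. intros; repeat apply Rmult_lt_0_compat; auto. Qed.

Lemma H_pos a k t : k > 0 -> t > 0 -> ccw (Cp a k t) ->
  H1 a k t > 0 /\ H3 a k t > 0 /\ H5 a k t > 0.
Proof.
intros Hk Ht Hc. destruct (ccw_D a k t Hk Ht Hc) as (HD1 & HD2 & HD3 & HG1 & _).
destruct (Cp_alg a k t Hk Ht (Rgt_ge _ _ HD1) (Rgt_ge _ _ HD2) (Rgt_ge _ _ HD3))
  as (_ & _ & _ & _ & _ & _ & E1 & E3 & E5).
rewrite <- E1, <- E3, <- E5. unfold Cp; cbn [fst snd Defs.A1 A2 A3 A4 A5].
pose proof (S1_pos _ _ _ HD1). pose proof (TT_sq _ _ (Rgt_ge _ _ HD3)).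
assert (TT a k > 0) by (unfold TT; apply sqrt_lt_R0; lra).
assert (Hw : (qq a t * S1 a k t + S2 a t * pp a k t) / (k * t) > 0).
{ unfold G1 in HG1. apply Rdiv_lt_0_compat; [lra|nra]. }
assert (Hk1 : / k > 0) by (apply Rinv_0_lt_compat; lra).
split; [|split].
- assert (0 - (qq a t * S1 a k t + S2 a t * pp a k t) / (k * t) <> 0) by lra.
  pose proof (pow2_ge_0 (k - (qq a t * pp a k t - S2 a t * S1 a k t) / (k * t))).
  assert ((0 - (qq a t * S1 a k t + S2 a t * pp a k t) / (k * t))^2 > 0) by (apply pow2_gt_0; auto). lra.
- assert ((qq a t * S1 a k t + S2 a t * pp a k t) / (k * t) - - TT a k / k <> 0).
  { unfold Rdiv at 2. nra. }
  pose proof (pow2_ge_0 ((qq a t * pp a k t - S2 a t * S1 a k t) / (k * t) - rr a k / k)).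
  assert (((qq a t * S1 a k t + S2 a t * pp a k t) / (k * t) - - TT a k / k)^2 > 0) by (apply pow2_gt_0; auto). lra.
- assert (- TT a k / k - S1 a k t / k <> 0) by (unfold Rdiv; nra).
  pose proof (pow2_ge_0 (rr a k / k - pp a k t / k)).
  assert ((- TT a k / k - S1 a k t / k)^2 > 0) by (apply pow2_gt_0; auto). lra.
Qed.

Lemma part1 a k P : (forall i : nat, (1 <= i <= 5)%nat -> 0 < a i) -> slice_int a k P ->
     (exists d, derivable_pt_lim (b_of_x2 a k 1) (x 2 P) d /\ d < 0) /\
     (exists d, derivable_pt_lim (b_of_x2 a k 3) (x 2 P) d /\ d < 0) /\
     (exists d, derivable_pt_lim (b_of_x2 a k 5) (x 2 P) d /\ 0 < d).
Proof.
intros Ha HS. destruct (slice_facts a k P Ha HS) as (Hk & Ht & Hc & _).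
set (t0 := x 2 P) in *.
destruct (ccw_near a k t0 Hk Ht Hc) as [d [Hd Hn]].
destruct (ccw_D a k t0 Hk Ht Hc) as (HD1 & HD2 & HD3 & HG1 & HG2 & HG3 & HG4).
destruct (H_pos a k t0 Hk Ht Hc) as (P1 & P3 & P5).
pose proof (S1_pos _ _ _ HD1). pose proof (S2_pos _ _ HD2).
assert (Hloc : forall t, Rabs (t - t0) < d ->
  b_of_x2 a k 1 t = sqrt (H1 a k t) /\ b_of_x2 a k 3 t = sqrt (H3 a k t) /\
  b_of_x2 a k 5 t = sqrt (H5 a k t)).
{ intros t Htd. destruct (Hn t Htd) as [Ht' Hc'].
  destruct (ccw_D a k t Hk Ht' Hc') as (D1' & D2' & D3' & _).
  destruct (b_Cp a k t Hk Ht' (Rgt_ge _ _ D1') (Rgt_ge _ _ D2') (Rgt_ge _ _ D3')) as (B1 & B3 & B5).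
  rewrite !bofx2_eq; auto. }
split; [|split].
- exists ((-(G1 a k t0 * G2 a k t0)/(t0^2 * S1 a k t0 * S2 a t0)) / (2 * sqrt (H1 a k t0))).
  split.
  + apply derivable_local with (g := fun t => sqrt (H1 a k t)) (d := d); auto.
    { intros t Htd. apply (Hloc t Htd). }
    apply is_derive_Reals. apply (is_derive_sqrt (H1 a k)); auto. apply dH1; auto.
  + assert (sqrt (H1 a k t0) > 0) by (apply sqrt_lt_R0; lra).
    apply Rdiv_neg_pos; [|lra]. apply Rdiv_neg_pos.
    * assert (G1 a k t0 * G2 a k t0 > 0) by nra. lra.
    * apply prod3; try apply pow_lt; lra.
- exists ((-(G2 a k t0 * G4 a k t0)/(k^2 * t0^2 * S1 a k t0 * S2 a t0)) / (2 * sqrt (H3 a k t0))).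
  split.
  + apply derivable_local with (g := fun t => sqrt (H3 a k t)) (d := d); auto.
    { intros t Htd. apply (Hloc t Htd). }
    apply is_derive_Reals. apply (is_derive_sqrt (H3 a k)); auto. apply dH3; auto.
  + assert (sqrt (H3 a k t0) > 0) by (apply sqrt_lt_R0; lra).
    apply Rdiv_neg_pos; [|lra]. apply Rdiv_neg_pos.
    * assert (G2 a k t0 * G4 a k t0 > 0) by nra. lra.
    * apply prod4; try apply pow_lt; lra.
- exists ((G3 a k t0/(k^2 * S1 a k t0)) / (2 * sqrt (H5 a k t0))).
  split.
  + apply derivable_local with (g := fun t => sqrt (H5 a k t)) (d := d); auto.
    { intros t Htd. apply (Hloc t Htd). }
    apply is_derive_Reals. apply (is_derive_sqrt (H5 a k)); auto. apply dH5; auto.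
  + assert (sqrt (H5 a k t0) > 0) by (apply sqrt_lt_R0; lra).
    apply Rdiv_lt_0_compat; [|lra]. apply Rdiv_lt_0_compat; [lra|].
    apply Rmult_lt_0_compat; try apply pow_lt; lra.
Qed.

Lemma sq_lemma W G X : X > 0 -> W^2 + G^2 = X^2 ->
  (G = 0 -> W < 0 -> W = - X) /\ (G <> 0 -> W > - X).
Proof.
intros HX HE. split.
- intros -> HW. assert ((W - X)*(W + X) = 0) by nra.
  apply Rmult_integral in H. destruct H; lra.
- intros HG. assert (G*G > 0) by (apply Rsqr_pos_lt; auto).
  destruct (Rlt_or_le (-X) W); auto. simpl in HE. nra.
Qed.

Lemma alg_id1 k t a1 a2 a5 p q s1 s2 :
  2*p = k^2+t-a5^2 -> 2*q = a2^2+t-a1^2 -> s1^2 = k^2*t - p^2 -> s2^2 = a2^2*t - q^2 ->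
  (q*p - s1*s2)^2 + (q*s1 + p*s2)^2 = (k*a2*t)^2 /\
  ((t-p)*(t-q) - s1*s2)^2 + ((t-p)*s2 + (t-q)*s1)^2 = (t*a1*a5)^2.
Proof. intros. split; simpl in *; nsatz. Qed.

Lemma alg_id3 k t a2 a3 a4 p q r s1 s2 T :
  2*r = a3^2+k^2-a4^2 -> s1^2 = k^2*t - p^2 -> s2^2 = a2^2*t - q^2 -> T^2 = a3^2*k^2 - r^2 ->
  (r*(q*p - s1*s2) - T*(q*s1 + p*s2))^2 + (r*(q*s1 + p*s2) + T*(q*p - s1*s2))^2
   = (a3*k^2*t*a2)^2.
Proof. intros. simpl in *. nsatz. Qed.

Lemma alg_id5 k t a3 a4 a5 p r s1 T :
  2*p = k^2+t-a5^2 -> 2*r = a3^2+k^2-a4^2 -> s1^2 = k^2*t - p^2 -> T^2 = a3^2*k^2 - r^2 ->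
  ((r-k^2)*(p-k^2) - T*s1)^2 + ((k^2-r)*s1 + T*(k^2-p))^2 = (k^2*a4*a5)^2.
Proof. intros. simpl in *. nsatz. Qed.


Lemma neg_lemma q s1 p s2 : s1 > 0 -> s2 > 0 -> q*s1 + p*s2 = 0 -> q*p - s1*s2 < 0.
Proof.
intros H1 H2 HG. assert (E : q*s1 = -(p*s2)) by lra.
assert (Hqp: q*p*(s1*s2) = -(p*s2)^2).
{ replace (q*p*(s1*s2)) with ((q*s1)*(p*s2)) by ring. rewrite E; ring. }
assert (s1*s2>0) by (apply Rmult_lt_0_compat; lra).
assert (q*p <= 0).
{ destruct (Rle_or_lt (q*p) 0); auto. assert (q*p*(s1*s2) > 0) by (apply Rmult_lt_0_compat; lra).
  pose proof (pow2_ge_0 (p*s2)). lra. }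
lra.
Qed.

Ltac pt_setup a k t HD1 HD2 HD3 :=
  pose proof (S1_sq _ _ _ (Rgt_ge _ _ HD1)) as Q1;
  pose proof (S2_sq _ _ (Rgt_ge _ _ HD2)) as Q2;
  pose proof (TT_sq _ _ (Rgt_ge _ _ HD3)) as Q3;
  pose proof (S1_pos _ _ _ HD1) as P1; pose proof (S2_pos _ _ HD2) as P2;
  assert (P3 : TT a k > 0) by (unfold TT; apply sqrt_lt_R0; lra);
  assert (Ep : 2 * pp a k t = k^2 + t - a 5%nat ^2) by (unfold pp; field);
  assert (Eq : 2 * qq a t = a 2%nat^2 + t - a 1%nat ^2) by (unfold qq; field);
  assert (Er : 2 * rr a k = a 3%nat^2 + k^2 - a 4%nat ^2) by (unfold rr; field);
  unfold D1, D2, D3 in Q1, Q2, Q3.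

Lemma M1 a k t : (forall i : nat, (1 <= i <= 5)%nat -> 0 < a i) -> k > 0 -> t > 0 ->
  D1 a k t > 0 -> D2 a t > 0 -> D3 a k > 0 ->
  (G1 a k t = 0 -> H1 a k t = (k + a 2%nat)^2) /\ (G1 a k t > 0 -> H1 a k t < (k + a 2%nat)^2) /\
  (G2 a k t = 0 -> H1 a k t = (a 1%nat + a 5%nat)^2) /\ (G2 a k t > 0 -> H1 a k t < (a 1%nat + a 5%nat)^2).
Proof.
intros Ha Hk Ht HD1 HD2 HD3. pt_setup a k t HD1 HD2 HD3.
pose proof (Ha 1%nat ltac:(lia)) as a1p. pose proof (Ha 2%nat ltac:(lia)) as a2p. pose proof (Ha 5%nat ltac:(lia)) as a5p.
destruct (alg_id1 k t (a 1%nat) (a 2%nat) (a 5%nat) _ _ _ _ Ep Eq Q1 Q2) as [I1 I2].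
assert (X1 : k * a 2%nat * t > 0) by (apply prod3; lra).
assert (X2 : t * a 1%nat * a 5%nat > 0) by (apply prod3; lra).
destruct (sq_lemma _ _ _ X1 I1) as [Z1 N1].
destruct (sq_lemma _ _ _ X2 I2) as [Z2 N2].
unfold G1, G2, H1, NN. set (p := pp a k t) in *. set (q := qq a t) in *.
set (s1 := S1 a k t) in *. set (s2 := S2 a t) in *.
repeat split.
- intros HG. assert (HW : q*p - s1*s2 < 0).
  { apply (neg_lemma q s1 p s2); auto. }
  rewrite (Z1 HG HW). field. lra.
- intros HG. specialize (N1 ltac:(lra)).
  apply Rminus_gt_0_lt. replace ((k + a 2%nat) ^ 2 - (k ^ 2 + a 2%nat ^ 2 - 2 * ((q * p - s1 * s2) / t)))
    with (2*((q * p - s1 * s2) + k * a 2%nat * t)/t) by (field; lra).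
  apply Rdiv_lt_0_compat; lra.
- intros HG. assert (HW : (t-p)*(t-q) - s1*s2 < 0).
  { replace ((t-p)*(t-q)) with ((t-q)*(t-p)) by ring. apply (neg_lemma (t-q) s1 (t-p) s2); auto. lra. }
  specialize (Z2 HG HW).
  transitivity (a 1%nat ^2 + a 5%nat ^2 - 2*(((t-p)*(t-q) - s1*s2)/t)).
  + unfold p, q, pp, qq. field. lra.
  + rewrite Z2. field. lra.
- intros HG. specialize (N2 ltac:(lra)).
  replace (k ^ 2 + a 2%nat ^ 2 - 2 * ((q * p - s1 * s2) / t)) with
     (a 1%nat ^2 + a 5%nat ^2 - 2*(((t-p)*(t-q) - s1*s2)/t)) by (unfold p, q, pp, qq; field; lra).
  apply Rminus_gt_0_lt. replace ((a 1%nat + a 5%nat) ^ 2 - (a 1%nat ^2 + a 5%nat ^2 - 2*(((t-p)*(t-q) - s1*s2)/t)))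
    with (2*(((t-p)*(t-q) - s1*s2) + t * a 1%nat * a 5%nat)/t) by (field; lra).
  apply Rdiv_lt_0_compat; lra.
Qed.

Lemma M4 a k t : (forall i : nat, (1 <= i <= 5)%nat -> 0 < a i) -> k > 0 -> t > 0 ->
  D1 a k t > 0 -> D2 a t > 0 -> D3 a k > 0 -> G1 a k t > 0 ->
  (G4 a k t = 0 -> H3 a k t = (a 2%nat + a 3%nat)^2) /\ (G4 a k t > 0 -> H3 a k t < (a 2%nat + a 3%nat)^2).
Proof.
intros Ha Hk Ht HD1 HD2 HD3 HG1. pt_setup a k t HD1 HD2 HD3.
pose proof (Ha 2%nat ltac:(lia)) as a2p. pose proof (Ha 3%nat ltac:(lia)) as a3p.
pose proof (alg_id3 k t (a 2%nat) (a 3%nat) (a 4%nat) _ _ _ _ _ _ Er Q1 Q2 Q3) as I3.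
assert (X : a 3%nat * k^2 * t * a 2%nat > 0) by (apply prod4; try apply pow_lt; lra).
destruct (sq_lemma _ _ _ X I3) as [Z N].
assert (EH : H3 a k t = a 3%nat ^2 + a 2%nat ^2 -
   2 * ((rr a k * (qq a t * pp a k t - S1 a k t * S2 a t) - TT a k * (qq a t * S1 a k t + pp a k t * S2 a t)) / (k^2*t))).
{ unfold H3, NN, VV. field. lra. }
rewrite EH. unfold G4, G1 in *.
set (p := pp a k t) in *. set (q := qq a t) in *. set (r := rr a k) in *.
set (s1 := S1 a k t) in *. set (s2 := S2 a t) in *. set (T := TT a k) in *.
assert (k^2*t > 0) by (apply Rmult_lt_0_compat; try apply pow_lt; lra).
split.
- intros HG. assert (HW : r * (q * p - s1 * s2) - T * (q * s1 + p * s2) < 0).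
  { assert (E : T * (q * p - s1 * s2) = - (r * (q * s1 + p * s2))) by lra.
    assert (E2 : (r * (q * p - s1 * s2) - T * (q * s1 + p * s2)) * T = - (r^2 + T^2) * (q * s1 + p * s2)).
    { replace ((r * (q * p - s1 * s2) - T * (q * s1 + p * s2)) * T) with
        (r * (T * (q * p - s1 * s2)) - T^2 * (q * s1 + p * s2)) by ring. rewrite E. ring. }
    assert (r^2 + T^2 > 0) by (pose proof (pow2_ge_0 r); assert (T^2 > 0) by (apply pow_lt; lra); lra).
    assert ((r^2 + T^2) * (q * s1 + p * s2) > 0) by (apply Rmult_lt_0_compat; lra).
    destruct (Rlt_or_le (r * (q * p - s1 * s2) - T * (q * s1 + p * s2)) 0); auto.
    assert ((r * (q * p - s1 * s2) - T * (q * s1 + p * s2)) * T >= 0).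
    { apply Rle_ge. apply Rmult_le_pos; lra. }
    lra. }
  rewrite (Z HG HW). field. lra.
- intros HG. specialize (N ltac:(lra)).
  apply Rminus_gt_0_lt.
  replace ((a 2%nat + a 3%nat) ^ 2 - (a 3%nat ^2 + a 2%nat ^2 - 2 * ((r * (q * p - s1 * s2) - T * (q * s1 + p * s2)) / (k^2*t))))
    with (2*((r * (q * p - s1 * s2) - T * (q * s1 + p * s2)) + a 3%nat * k^2 * t * a 2%nat)/(k^2*t)) by (field; lra).
  apply Rdiv_lt_0_compat; lra.
Qed.

Lemma M3 a k t : (forall i : nat, (1 <= i <= 5)%nat -> 0 < a i) -> k > 0 -> t > 0 ->
  D1 a k t > 0 -> D2 a t > 0 -> D3 a k > 0 ->
  (G3 a k t = 0 -> H5 a k t = (a 4%nat + a 5%nat)^2) /\ (G3 a k t > 0 -> H5 a k t < (a 4%nat + a 5%nat)^2).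
Proof.
intros Ha Hk Ht HD1 HD2 HD3. pt_setup a k t HD1 HD2 HD3.
pose proof (Ha 4%nat ltac:(lia)) as a4p. pose proof (Ha 5%nat ltac:(lia)) as a5p.
pose proof (alg_id5 k t (a 3%nat) (a 4%nat) (a 5%nat) _ _ _ _ Ep Er Q1 Q3) as I5.
assert (X : k^2 * a 4%nat * a 5%nat > 0) by (apply prod3; try apply pow_lt; lra).
destruct (sq_lemma _ _ _ X I5) as [Z N].
assert (EH : H5 a k t = a 4%nat ^2 + a 5%nat ^2 -
   2 * (((rr a k - k^2) * (pp a k t - k^2) - TT a k * S1 a k t) / k^2)).
{ unfold H5, pp, rr. field. lra. }
rewrite EH. unfold G3 in *.
set (p := pp a k t) in *. set (r := rr a k) in *.
set (s1 := S1 a k t) in *. set (T := TT a k) in *.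
assert (k^2 > 0) by (apply pow_lt; lra).
split.
- intros HG. assert (HW : (r - k^2) * (p - k^2) - T * s1 < 0).
  { replace ((r - k^2) * (p - k^2) - T * s1) with ((k^2 - r) * (k^2 - p) - s1 * T) by ring.
    apply neg_lemma; auto; lra. }
  rewrite (Z HG HW). field. lra.
- intros HG. specialize (N ltac:(lra)).
  apply Rminus_gt_0_lt.
  replace ((a 4%nat + a 5%nat) ^ 2 - (a 4%nat ^2 + a 5%nat ^2 - 2 * (((r - k^2) * (p - k^2) - T * s1) / k^2)))
    with (2*(((r - k^2) * (p - k^2) - T * s1) + k^2 * a 4%nat * a 5%nat)/k^2) by (field; lra).
  apply Rdiv_lt_0_compat; lra.
Qed.

Lemma first_zero (Gf : R -> R) a b : a <= b -> (forall t, a <= t <= b -> continuity_pt Gf t) ->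
  Gf a > 0 -> (exists t, a <= t <= b /\ Gf t <= 0) ->
  exists c, a < c <= b /\ Gf c = 0 /\ forall u, a <= u < c -> Gf u > 0.
Proof.
intros Hab Hc Ha Hex.
set (Es := fun s => a <= s <= b /\ forall u, a <= u <= s -> Gf u > 0).
assert (Hb : bound Es). { exists b. intros s [Hs _]. lra. }
assert (He : exists s, Es s). { exists a. split; [lra|]. intros u Hu. replace u with a by lra. exact Ha. }
destruct (completeness Es Hb He) as [c [Hub Hlub]].
assert (Hac : a <= c). { apply Hub. destruct He as [s Hs]. split; [lra|]. intros u Hu. replace u with a by lra. exact Ha. }
assert (Hcb : c <= b). { apply Hlub. intros s [Hs _]. lra. }
assert (Hbelow : forall u, a <= u < c -> Gf u > 0).
{ intros u Hu. destruct (classic (exists s, Es s /\ u < s)) as [[s [[Hs1 Hs2] Hus]]|Hn].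
  - apply Hs2; lra.
  - exfalso. assert (c <= u). { apply Hlub. intros s Hs. destruct (Rle_or_lt s u); auto.
      exfalso; apply Hn; exists s; auto. } lra. }
assert (Hnpos : ~ Gf c > 0).
{ intros Hp. destruct (cont_pos Gf c (Hc c ltac:(lra)) Hp) as [d [Hd Hn]].
  destruct (Rlt_or_le c b) as [Hlt|Hge].
  - set (s := Rmin b (c + d/2)).
    assert (Es s).
    { split. { unfold s. split; [|apply Rmin_l]. apply Rmin_glb; lra. }
      intros u Hu. destruct (Rlt_or_le u c). { apply Hbelow; lra. }
      apply Hn. assert (u <= c + d/2) by (eapply Rle_trans; [apply Hu|apply Rmin_r]).
      apply Rabs_def1; lra. }
    assert (s <= c) by (apply Hub; auto).
    assert (c < s). { unfold s. apply Rmin_glb_lt; lra. } lra.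
  - destruct Hex as [t [Ht Ht0]]. destruct (Rlt_or_le t c).
    + assert (Gf t > 0) by (apply Hbelow; lra). lra.
    + assert (Gf t > 0) by (apply Hn; rewrite Rabs_right; lra). lra. }
assert (Hnneg : ~ Gf c < 0).
{ intros Hneg.
  assert (Hac' : a < c). { destruct (Req_dec a c) as [E|E]; [subst; lra|lra]. }
  destruct (cont_pos (fun t => - Gf t) c (continuity_pt_opp _ _ (Hc c ltac:(lra))) ltac:(lra)) as [d [Hd Hn]].
  set (u := Rmax a (c - d/2)).
  assert (a <= u < c). { unfold u. split; [apply Rmax_l|]. apply Rmax_lub_lt; lra. }
  assert (Gf u > 0) by (apply Hbelow; auto).
  assert (- Gf u > 0).
  { apply Hn. assert (c - d/2 <= u) by (unfold u; apply Rmax_r). rewrite Rabs_left1; lra. }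
  lra. }
assert (Hz : Gf c = 0) by lra.
exists c. split; [|split; auto].
split; auto. destruct (Req_dec a c) as [E|E]; [subst; lra|lra].
Qed.

Lemma mvt_point (h dh : R -> R) a b : a < b -> (forall u, a <= u <= b -> is_derive h u (dh u)) ->
  exists xi, a <= xi <= b /\ h b - h a = dh xi * (b - a).
Proof.
intros Hab Hd.
destruct (MVT_gen h a b dh) as [xi [Hxi E]].
- intros u Hu. rewrite Rmin_left, Rmax_right in Hu by lra. apply Hd; lra.
- intros u Hu. rewrite Rmin_left, Rmax_right in Hu by lra. apply cont_of_derive.
  eexists; apply Hd; lra.
- rewrite Rmin_left, Rmax_right in Hxi by lra. exists xi; auto.
Qed.

Lemma dec_lem (h dh : R -> R) a c : a < c -> (forall u, a <= u <= c -> is_derive h u (dh u)) ->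
  (forall u, a <= u <= c -> dh u <= 0) -> (forall u, a <= u < c -> dh u < 0) -> h c < h a.
Proof.
intros Hac Hd Hle Hlt. set (m := (a + c)/2).
destruct (mvt_point h dh a m) as [x1 [Hx1 E1]]. { unfold m; lra. } { intros u Hu; apply Hd; unfold m in *; lra. }
destruct (mvt_point h dh m c) as [x2 [Hx2 E2]]. { unfold m; lra. } { intros u Hu; apply Hd; unfold m in *; lra. }
assert (dh x1 < 0) by (apply Hlt; unfold m in *; lra).
assert (dh x2 <= 0) by (apply Hle; unfold m in *; lra).
assert (dh x1 * (m - a) < 0) by (apply Rmult_neg_pos; unfold m; lra).
assert (0 <= -(dh x2) * (c - m)) by (apply Rmult_le_pos; unfold m in *; lra).
lra.
Qed.

Lemma inc_lem (h dh : R -> R) c b : c < b -> (forall u, c <= u <= b -> is_derive h u (dh u)) ->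
  (forall u, c <= u <= b -> dh u >= 0) -> (forall u, c < u <= b -> dh u > 0) -> h c < h b.
Proof.
intros Hac Hd Hle Hlt. set (m := (c + b)/2).
destruct (mvt_point h dh c m) as [x1 [Hx1 E1]]. { unfold m; lra. } { intros u Hu; apply Hd; unfold m in *; lra. }
destruct (mvt_point h dh m b) as [x2 [Hx2 E2]]. { unfold m; lra. } { intros u Hu; apply Hd; unfold m in *; lra. }
assert (dh x1 >= 0) by (apply Hle; unfold m in *; lra).
assert (dh x2 > 0) by (apply Hlt; unfold m in *; lra).
assert (dh x1 * (m - c) >= 0) by (apply Rle_ge; apply Rmult_le_pos; unfold m; lra).
assert (dh x2 * (b - m) > 0) by (apply Rmult_lt_0_compat; unfold m; lra).
lra.
Qed.

Lemma D1_between a k t1 t2 t : t1 <= t <= t2 -> D1 a k t1 > 0 -> D1 a k t2 > 0 -> D1 a k t > 0.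
Proof.
intros Ht H1 H2. destruct (Req_dec t1 t2) as [E|E]. { subst. replace t with t2 by lra. auto. }
assert (Id : (t2 - t1) * D1 a k t = (t2 - t) * D1 a k t1 + (t - t1) * D1 a k t2 + (t - t1)*(t2 - t)*(t2 - t1)/4)
  by (unfold D1, pp; field).
assert (0 <= (t - t1)*(t2 - t)*(t2 - t1)/4) by (repeat apply Rmult_le_pos; lra).
assert ((t2 - t) * D1 a k t1 + (t - t1) * D1 a k t2 > 0).
{ destruct (Req_dec t t1). { subst. nra. } nra. }
nra.
Qed.

Lemma D2_between a t1 t2 t : t1 <= t <= t2 -> D2 a t1 > 0 -> D2 a t2 > 0 -> D2 a t > 0.
Proof.
intros Ht H1 H2. destruct (Req_dec t1 t2) as [E|E]. { subst. replace t with t2 by lra. auto. }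
assert (Id : (t2 - t1) * D2 a t = (t2 - t) * D2 a t1 + (t - t1) * D2 a t2 + (t - t1)*(t2 - t)*(t2 - t1)/4)
  by (unfold D2, qq; field).
assert (0 <= (t - t1)*(t2 - t)*(t2 - t1)/4) by (repeat apply Rmult_le_pos; lra).
assert ((t2 - t) * D2 a t1 + (t - t1) * D2 a t2 > 0).
{ destruct (Req_dec t t1). { subst. nra. } nra. }
nra.
Qed.

Lemma G_cont a k t : t > 0 -> D1 a k t > 0 -> D2 a t > 0 ->
  continuity_pt (G1 a k) t /\ continuity_pt (G2 a k) t /\ continuity_pt (G3 a k) t /\
  continuity_pt (G4 a k) t.
Proof.
intros Ht HD1 HD2.
pose proof (dS1 _ _ _ HD1) as E1. pose proof (dS2 _ _ HD2) as E2.
repeat split; apply cont_of_derive; unfold G4, G1, G2, G3, pp, qq; auto_derive; repeat split;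
  try (eexists; exact E1); try (eexists; exact E2).
Qed.

Lemma part2 a k P Q : (forall i : nat, (1 <= i <= 5)%nat -> 0 < a i) ->
  slice_int a k P -> slice_int a k Q -> x 2 P < x 2 Q ->
  b 1 Q < b 1 P /\ b 3 Q < b 3 P /\ b 5 P < b 5 Q.
Proof.
intros Ha SP SQ Hlt.
destruct (slice_facts a k P Ha SP) as (Hk & HtP & HcP & HbP).
destruct (slice_facts a k Q Ha SQ) as (_ & HtQ & HcQ & HbQ).
set (tP := x 2 P) in *. set (tQ := x 2 Q) in *.
destruct (ccw_D a k tP Hk HtP HcP) as (D1P & D2P & D3P & G1P & G2P & G3P & G4P).
destruct (ccw_D a k tQ Hk HtQ HcQ) as (D1Q & D2Q & _ & G1Q & G2Q & G3Q & G4Q).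
destruct (H_pos a k tP Hk HtP HcP) as (H1P & H3P & H5P).
destruct (H_pos a k tQ Hk HtQ HcQ) as (H1Q & H3Q & H5Q).
destruct (b_Cp a k tP Hk HtP (Rgt_ge _ _ D1P) (Rgt_ge _ _ D2P) (Rgt_ge _ _ D3P)) as (B1P & B3P & B5P).
destruct (b_Cp a k tQ Hk HtQ (Rgt_ge _ _ D1Q) (Rgt_ge _ _ D2Q) (Rgt_ge _ _ D3P)) as (B1Q & B3Q & B5Q).
rewrite !HbP, !HbQ, B1P, B3P, B5P, B1Q, B3Q, B5Q.
assert (Hint : forall t, tP <= t <= tQ -> t > 0 /\ D1 a k t > 0 /\ D2 a t > 0).
{ intros t Ht. split; [lra|split].
  - apply (D1_between a k tP tQ); auto.
  - apply (D2_between a tP tQ); auto. }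
assert (Hcont : forall t, tP <= t <= tQ ->
   continuity_pt (G1 a k) t /\ continuity_pt (G2 a k) t /\ continuity_pt (G3 a k) t /\
   continuity_pt (G4 a k) t).
{ intros t Ht. destruct (Hint t Ht) as (? & ? & ?). apply G_cont; auto. }
assert (HS : forall t, tP <= t <= tQ -> S1 a k t > 0 /\ S2 a t > 0).
{ intros t Ht. destruct (Hint t Ht) as (? & ? & ?). split; [apply S1_pos|apply S2_pos]; auto. }
assert (CA : forall t, tP <= t <= tQ -> G1 a k t > 0 /\ G2 a k t > 0).
{ apply NNPP. intros Hn. apply not_all_ex_not in Hn. destruct Hn as [t0 Ht0].
  apply imply_to_and in Ht0. destruct Ht0 as [Ht0 Hn0].
  set (Gm := fun t => (G1 a k t + G2 a k t - Rabs (G1 a k t - G2 a k t))/2).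
  assert (Gm_pos : forall t, Gm t > 0 <-> G1 a k t > 0 /\ G2 a k t > 0).
  { intros t. unfold Gm. unfold Rabs. destruct (Rcase_abs _); split; intros; lra. }
  destruct (first_zero Gm tP tQ ltac:(lra)) as [c [Hc [Hz Hb]]].
  - intros t Ht. destruct (Hcont t Ht) as (c1 & c2 & _). unfold Gm.
    apply continuity_pt_mult; [|apply continuity_pt_const; intros ? ?; reflexivity].
    apply continuity_pt_minus; [apply continuity_pt_plus; auto|].
    apply (continuity_pt_comp (fun t => G1 a k t - G2 a k t) Rabs).
    + apply continuity_pt_minus; auto.
    + apply Rcontinuity_abs.
  - apply Gm_pos; auto.
  - exists t0. split; auto. destruct (Rle_or_lt (Gm t0) 0); auto. exfalso; apply Hn0. apply Gm_pos; lra.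
  - assert (Hge : G1 a k c >= 0 /\ G2 a k c >= 0 /\ (G1 a k c = 0 \/ G2 a k c = 0)).
    { unfold Gm in Hz. unfold Rabs in Hz. destruct (Rcase_abs _); lra. }
    assert (Hdec : H1 a k c < H1 a k tP).
    { apply (dec_lem (H1 a k) (fun u => -(G1 a k u * G2 a k u)/(u^2 * S1 a k u * S2 a u))); [lra| | |].
      - intros u Hu. destruct (Hint u ltac:(lra)) as (? & ? & ?). apply dH1; auto.
      - intros u Hu. destruct (HS u ltac:(lra)) as [s1p s2p]. destruct (Hint u ltac:(lra)) as (up & _ & _).
        assert (G1 a k u >= 0 /\ G2 a k u >= 0).
        { destruct (Rlt_or_le u c). { destruct (proj1 (Gm_pos u) (Hb u ltac:(lra))); lra. }
          replace u with c by lra. lra. }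
        unfold Rdiv. assert (0 < / (u ^ 2 * S1 a k u * S2 a u)).
        { apply Rinv_0_lt_compat. apply prod3; try apply pow_lt; lra. }
        assert (0 <= G1 a k u * G2 a k u) by (apply Rmult_le_pos; lra). nra.
      - intros u Hu. destruct (HS u ltac:(lra)) as [s1p s2p]. destruct (Hint u ltac:(lra)) as (up & _ & _).
        destruct (proj1 (Gm_pos u) (Hb u Hu)).
        apply Rdiv_neg_pos. { assert (G1 a k u * G2 a k u > 0) by (apply Rmult_lt_0_compat; lra). lra. }
        apply prod3; try apply pow_lt; lra. }
    destruct (Hint c ltac:(lra)) as (cp & D1c & D2c).
    destruct (M1 a k c Ha Hk cp D1c D2c D3P) as (Z1 & _ & Z2 & _).
    destruct (M1 a k tP Ha Hk HtP D1P D2P D3P) as (_ & L1 & _ & L2).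
    destruct Hge as (_ & _ & [E|E]).
    + specialize (Z1 E). specialize (L1 G1P). lra.
    + specialize (Z2 E). specialize (L2 G2P). lra. }
assert (CB : forall t, tP <= t <= tQ -> G4 a k t > 0).
{ apply NNPP. intros Hn. apply not_all_ex_not in Hn. destruct Hn as [t0 Ht0].
  apply imply_to_and in Ht0. destruct Ht0 as [Ht0 Hn0].
  destruct (first_zero (G4 a k) tP tQ ltac:(lra)) as [c [Hc [Hz Hb]]].
  - intros t Ht. apply (Hcont t Ht).
  - auto.
  - exists t0. split; auto. lra.
  - assert (Hdec : H3 a k c < H3 a k tP).
    { apply (dec_lem (H3 a k) (fun u => -(G2 a k u * G4 a k u)/(k^2 * u^2 * S1 a k u * S2 a u))); [lra| | |].
      - intros u Hu. destruct (Hint u ltac:(lra)) as (? & ? & ?). apply dH3; auto.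
      - intros u Hu. destruct (HS u ltac:(lra)) as [s1p s2p]. destruct (Hint u ltac:(lra)) as (up & _ & _).
        assert (G4 a k u >= 0).
        { destruct (Rlt_or_le u c). { specialize (Hb u ltac:(lra)). lra. }
          replace u with c by lra. lra. }
        destruct (CA u ltac:(lra)) as [_ g2].
        unfold Rdiv. assert (0 < / (k^2 * u ^ 2 * S1 a k u * S2 a u)).
        { apply Rinv_0_lt_compat. apply prod4; try apply pow_lt; lra. }
        assert (0 <= G2 a k u * G4 a k u) by (apply Rmult_le_pos; lra). nra.
      - intros u Hu. destruct (HS u ltac:(lra)) as [s1p s2p]. destruct (Hint u ltac:(lra)) as (up & _ & _).
        destruct (CA u ltac:(lra)) as [_ g2]. specialize (Hb u Hu).
        apply Rdiv_neg_pos. { assert (G2 a k u * G4 a k u > 0) by (apply Rmult_lt_0_compat; lra). lra. }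
        apply prod4; try apply pow_lt; lra. }
    destruct (Hint c ltac:(lra)) as (cp & D1c & D2c).
    destruct (M4 a k c Ha Hk cp D1c D2c D3P (proj1 (CA c ltac:(lra)))) as (Z & _).
    destruct (M4 a k tP Ha Hk HtP D1P D2P D3P G1P) as (_ & L).
    specialize (Z Hz). specialize (L G4P). lra. }
assert (CC : forall t, tP <= t <= tQ -> G3 a k t > 0).
{ apply NNPP. intros Hn. apply not_all_ex_not in Hn. destruct Hn as [t0 Ht0].
  apply imply_to_and in Ht0. destruct Ht0 as [Ht0 Hn0].
  set (Gr := fun s => G3 a k (tP + tQ - s)).
  destruct (first_zero Gr tP tQ ltac:(lra)) as [c' [Hc [Hz Hb]]].
  - intros s Hs. unfold Gr.
    apply (continuity_pt_comp (fun s => tP + tQ - s) (G3 a k)).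
    + apply continuity_pt_minus; [apply continuity_pt_const; intros ? ?; reflexivity|apply continuity_pt_id].
    + apply (Hcont (tP + tQ - s)); lra.
  - unfold Gr. replace (tP + tQ - tP) with tQ by ring. auto.
  - exists (tP + tQ - t0). split; [lra|]. unfold Gr. replace (tP + tQ - (tP + tQ - t0)) with t0 by ring. lra.
  - set (c := tP + tQ - c').
    assert (Gc : G3 a k c = 0) by exact Hz.
    assert (Gpos : forall u, c < u <= tQ -> G3 a k u > 0).
    { intros u Hu. specialize (Hb (tP + tQ - u) ltac:(unfold c in Hu; lra)). unfold Gr in Hb.
      replace (tP + tQ - (tP + tQ - u)) with u in Hb by ring. exact Hb. }
    assert (Hinc : H5 a k c < H5 a k tQ).
    { apply (inc_lem (H5 a k) (fun u => G3 a k u/(k^2 * S1 a k u))); [unfold c; lra| | |].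
      - intros u Hu. destruct (Hint u ltac:(unfold c in Hu; lra)) as (? & ? & ?). apply dH5; auto.
      - intros u Hu. destruct (HS u ltac:(unfold c in Hu; lra)) as [s1p s2p].
        assert (G3 a k u >= 0).
        { destruct (Rlt_or_le c u). { specialize (Gpos u ltac:(lra)). lra. }
          replace u with c by lra. lra. }
        apply Rle_ge. apply Rmult_le_pos; [lra|]. apply Rlt_le. apply Rinv_0_lt_compat.
        apply Rmult_lt_0_compat; try apply pow_lt; lra.
      - intros u Hu. destruct (HS u ltac:(unfold c in Hu; lra)) as [s1p s2p].
        specialize (Gpos u Hu). apply Rdiv_lt_0_compat; [lra|].
        apply Rmult_lt_0_compat; try apply pow_lt; lra. }
    destruct (Hint c ltac:(unfold c; lra)) as (cp & D1c & D2c).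
    destruct (M3 a k c Ha Hk cp D1c D2c D3P) as (Z & _).
    destruct (M3 a k tQ Ha Hk HtQ D1Q D2Q D3P) as (_ & L).
    specialize (Z Gc). specialize (L G3Q). lra. }
split; [|split]; apply sqrt_lt_1_alt.
- split; [lra|].
  apply (dec_lem (H1 a k) (fun u => -(G1 a k u * G2 a k u)/(u^2 * S1 a k u * S2 a u))); [lra| | |].
  + intros u Hu. destruct (Hint u Hu) as (? & ? & ?). apply dH1; auto.
  + intros u Hu. destruct (HS u Hu) as [s1p s2p]. destruct (Hint u Hu) as (up & _ & _).
    destruct (CA u Hu).
    apply Rlt_le. apply Rdiv_neg_pos. { assert (G1 a k u * G2 a k u > 0) by (apply Rmult_lt_0_compat; lra). lra. }
    apply prod3; try apply pow_lt; lra.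
  + intros u Hu. destruct (HS u ltac:(lra)) as [s1p s2p]. destruct (Hint u ltac:(lra)) as (up & _ & _).
    destruct (CA u ltac:(lra)).
    apply Rdiv_neg_pos. { assert (G1 a k u * G2 a k u > 0) by (apply Rmult_lt_0_compat; lra). lra. }
    apply prod3; try apply pow_lt; lra.
- split; [lra|].
  apply (dec_lem (H3 a k) (fun u => -(G2 a k u * G4 a k u)/(k^2 * u^2 * S1 a k u * S2 a u))); [lra| | |].
  + intros u Hu. destruct (Hint u Hu) as (? & ? & ?). apply dH3; auto.
  + intros u Hu. destruct (HS u Hu) as [s1p s2p]. destruct (Hint u Hu) as (up & _ & _).
    destruct (CA u Hu). pose proof (CB u Hu).
    apply Rlt_le. apply Rdiv_neg_pos. { assert (G2 a k u * G4 a k u > 0) by (apply Rmult_lt_0_compat; lra). lra. }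
    apply prod4; try apply pow_lt; lra.
  + intros u Hu. destruct (HS u ltac:(lra)) as [s1p s2p]. destruct (Hint u ltac:(lra)) as (up & _ & _).
    destruct (CA u ltac:(lra)). pose proof (CB u ltac:(lra)).
    apply Rdiv_neg_pos. { assert (G2 a k u * G4 a k u > 0) by (apply Rmult_lt_0_compat; lra). lra. }
    apply prod4; try apply pow_lt; lra.
- split; [lra|].
  apply (inc_lem (H5 a k) (fun u => G3 a k u/(k^2 * S1 a k u))); [lra| | |].
  + intros u Hu. destruct (Hint u Hu) as (? & ? & ?). apply dH5; auto.
  + intros u Hu. destruct (HS u Hu) as [s1p s2p]. pose proof (CC u Hu).
    apply Rle_ge. apply Rlt_le. apply Rdiv_lt_0_compat; [lra|].
    apply Rmult_lt_0_compat; try apply pow_lt; lra.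
  + intros u Hu. destruct (HS u ltac:(lra)) as [s1p s2p]. pose proof (CC u ltac:(lra)).
    apply Rdiv_lt_0_compat; [lra|].
    apply Rmult_lt_0_compat; try apply pow_lt; lra.
Qed.

Theorem lemma5 (a : nat -> R) (k : R) :
  (forall i : nat, (1 <= i <= 5)%nat -> 0 < a i) ->
  (forall P : pent, slice_int a k P ->
     (exists d, derivable_pt_lim (b_of_x2 a k 1) (x 2 P) d /\ d < 0) /\
     (exists d, derivable_pt_lim (b_of_x2 a k 3) (x 2 P) d /\ d < 0) /\
     (exists d, derivable_pt_lim (b_of_x2 a k 5) (x 2 P) d /\ 0 < d)) /\
  (forall P Q : pent, slice_int a k P -> slice_int a k Q -> x 2 P < x 2 Q ->
     b 1 Q < b 1 P /\ b 3 Q < b 3 P /\ b 5 P < b 5 Q).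
Proof.
intros Ha. split.
- intros P HP. exact (part1 a k P Ha HP).
- intros P Q HP HQ Hlt. exact (part2 a k P Q Ha HP HQ Hlt).
Qed.
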